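(* The points $P=(\theta,1)$ and $Q=(\theta,0)$ are saddle fixed points of $F$ of indices $u$ and $u+1$, respectively, that are related by a heterodimensional cycle, i.e. $W^s(P,F)\cap W^u(Q,F)\neq\emptyset$ and $W^u(P,F)\cap W^s(Q,F)\neq\emptyset$.
   Context: Let $f_0,f_1\colon[0,1]\to[0,1]$ be $C^1$ injective maps such that: (F0.i) $f_0$ is increasing and has exactly two fixed points $0$ and $1$, both hyperbolic, with $f_0'(0)=\beta>1$, $f_0'(1)=\lambda\in(0,1)$ and $\lambda\le f_0'(x)\le\beta$ for all $x\in[0,1]$; (F0.ii) there are intervals $I_0=[a_0,b_0]\subset(0,1)$ with $b_0=f_0(a_0)$ and $I_1=[a_1,b_1]$ with $b_1=f_0(a_1)$, and numbers $\alpha>1$, $N\ge1$, with $f_0^N(I_0)=I_1$ and $\lambda\,(f_0^N)'(x)>\alpha$ for all $x\in I_0$; moreover $f_0$ is expanding on $[0,b_0]$ and contracting on $[a_1,1]$; (F1.i) $f_1$ is decreasing with $\gamma'=\min_{[0,1]}|f_1'|\le\gamma=\max_{[0,1]}|f_1'|<1$; (F1.ii) $|f_1'(x)|\ge\bar\alpha>1/\alpha$ for all $x\in[f_1^2(a_1),a_1]$; (F01) $f_1(1)=0$, $f_1([a_1,1])\subset[0,a_0)$, and $[0,f_0^{-2}(b_0))\subset f_1([0,1])$. Setting: $s,u\ge1$ integers, $\widehat{\mathbf C}=[0,1]^{s+u}$, $\Sigma_2=\{0,1\}^{\mathbb Z}$ with shift $\sigma$; $\Phi$ is a diffeomorphism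 of $\mathbb R^{s+u}$ with a horseshoe $\Gamma\subset\widehat{\mathbf C}$ with $s$-dimensional stable and $u$-dimensional unstable bundles, conjugate to $\sigma$ via $\varpi\colon\Gamma\to\Sigma_2$; sub-cubes $\widehat{\mathbf C}_0,\widehat{\mathbf C}_1$ are mapped affinely and in a Markovian way by $\Phi$ into $\widehat{\mathbf C}$, $\widehat{\mathbf C}_i$ containing the points $X\in\Gamma$ with $(\varpi(X))_0=i$; $\theta=\varpi^{-1}(0^{\mathbb Z})=0^{s+u}$, $W^s_{\rm loc}(\theta,\Phi)=[0,1]^s\times\{0^u\}$, $W^u_{\rm loc}(\theta,\Phi)=\{0^s\}\times[0,1]^u$. $\mathbf C=\widehat{\mathbf C}\times[0,1]$, $F(\widehat x,x)=(\Phi(\widehat x),f_i(x))$ if $\widehat x\in\widehat{\mathbf C}_i$. The expansion of $\Phi$ along its unstable direction is stronger than $\beta$ and its contraction along its stable direction is stronger than $\min\{\lambda,\gamma'\}$, so the splitting $E^{ss}\oplus E^c\oplus E^{uu}$ is dominated. The index of a saddle is the dimension of its unstable direction; $W^s(\cdot,F)$, $W^u(\cdot,F)$ denote stable and unstable manifolds of orbits. *)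

(* Defs.v *)
From HB Require Import structures.
From mathcomp Require Import all_boot all_order all_algebra.
From mathcomp Require Import all_classical all_reals all_analysis.
Set Implicit Arguments. Unset Strict Implicit. Unset Printing Implicit Defensive.
Import Order.TTheory GRing.Theory Num.Theory.
Import numFieldNormedType.Exports.
Local Open Scope classical_set_scope.
Local Open Scope ring_scope.

Section Defs.
Variable R : realType.

Definition Icc (a b : R) : set R := [set x | a <= x <= b].

Definition cube n : set 'rV[R]_n := [set v | forall j, 0 <= v ord0 j <= 1].
Arguments cube n : clear implicits.

Definition box {n} (a b : 'I_n -> R) : set 'rV[R]_n :=
  [set v | forall j, a j <= v ord0 j <= b j].

(* Linear algebra of tangent maps (row-vector convention: v |-> v *m A) *)

Definition jac n (f : 'rV[R]_n -> 'rV[R]_n) (x : 'rV[R]_n) : 'M[R]_n :=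
  lin1_mx ('d f x).

Definition mxpow n (A : 'M[R]_n) (m : nat) : 'M[R]_n :=
  iter m (fun M => M *m A) 1%:M.

(* tangent cocycle D f^m (x) = J x *m J (f x) *m ... *m J (f^(m-1) x) *)
Fixpoint cocycle n (J : 'rV[R]_n -> 'M[R]_n) (f : 'rV[R]_n -> 'rV[R]_n)
    (m : nat) (x : 'rV[R]_n) : 'M[R]_n :=
  match m with
  | 0 => 1%:M
  | m'.+1 => J x *m cocycle J f m' (f x)
  end.

Definition hyperbolic_mx n (A : 'M[R]_n) (k : nat) : Prop :=
  exists Es Eu : 'M[R]_n,
    (1%:M <= Es + Eu)%MS /\ mxdirect (Es + Eu) /\ \rank Eu = k /\
    (Es *m A <= Es)%MS /\ (Eu *m A <= Eu)%MS /\
    exists c mu : R, [/\ 0 < c, 0 < mu, mu < 1 &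
      forall (m : nat) (v : 'rV[R]_n),
        ((v <= Es)%MS -> `|v *m mxpow A m| <= c * mu ^+ m * `|v|) /\
        ((v <= Eu)%MS -> `|v| <= c * mu ^+ m * `|v *m mxpow A m|)].

(* saddle of index k (index = dimension of the unstable direction) for a
   fixed point whose tangent map is A *)
Definition saddle_mx n (A : 'M[R]_n) (k : nat) : Prop :=
  hyperbolic_mx A k /\ (0 < k < n)%N.

Definition hyperbolic_set n (f : 'rV[R]_n -> 'rV[R]_n)
    (J : 'rV[R]_n -> 'M[R]_n) (Gamma : set 'rV[R]_n) (ds du : nat)
    (ks ku : R) : Prop :=
  exists (Es Eu : 'rV[R]_n -> 'M[R]_n) (c : R), 0 < c /\
    forall x, Gamma x ->
      \rank (Es x) = ds /\ \rank (Eu x) = du /\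
      (1%:M <= Es x + Eu x)%MS /\
      (Es x *m J x == Es (f x))%MS /\ (Eu x *m J x == Eu (f x))%MS /\
      forall (m : nat) (v : 'rV[R]_n),
        ((v <= Es x)%MS -> `|v *m cocycle J f m x| <= c * ks ^+ m * `|v|) /\
        ((v <= Eu x)%MS -> c * ku ^+ m * `|v| <= `|v *m cocycle J f m x|).

Definition diffeo n (f : 'rV[R]_n -> 'rV[R]_n) : Prop :=
  exists g : 'rV[R]_n -> 'rV[R]_n,
    cancel f g /\ cancel g f /\
    (forall x, differentiable f x) /\ (forall x, differentiable g x) /\
    continuous (jac f) /\ continuous (jac g).

Definition Sigma2 := int -> bool.      (* {0,1}^Z, false = 0, true = 1 *)
Definition shift (w : Sigma2) : Sigma2 := fun k => w (k + 1)%R.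
Definition zero_seq : Sigma2 := fun _ => false.

(* pi : Gamma -> Sigma2 is a topological conjugacy between f|Gamma and the
   shift (product topology on Sigma2, written out coordinatewise). *)
Definition conjugacy n (f : 'rV[R]_n -> 'rV[R]_n) (Gamma : set 'rV[R]_n)
    (pi : 'rV[R]_n -> Sigma2) : Prop :=
  (forall x, Gamma x -> Gamma (f x)) /\
  (forall x, Gamma x -> pi (f x) = shift (pi x)) /\
  (forall x y, Gamma x -> Gamma y -> pi x = pi y -> x = y) /\
  (forall w, exists2 x, Gamma x & pi x = w) /\
  (* continuity of pi *)
  (forall x k, Gamma x -> exists2 e : R, 0 < e &
     forall y, Gamma y -> `|x - y| < e -> pi y k = pi x k) /\
  (* continuity of pi^-1 *)
  (forall x (e : R), Gamma x -> 0 < e -> exists K : nat,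
     forall y, Gamma y -> (forall k : int, `|k| <= K%:Z -> pi y k = pi x k) ->
       `|x - y| < e).

Definition Wsloc n (f : 'rV[R]_n -> 'rV[R]_n) (C0 : set 'rV[R]_n)
    (th : 'rV[R]_n) : set 'rV[R]_n :=
  [set x | (forall m, C0 (iter m f x)) /\ (fun m => iter m f x) @ \oo --> th].

Definition Wuloc n (f : 'rV[R]_n -> 'rV[R]_n) (C0 : set 'rV[R]_n)
    (th : 'rV[R]_n) : set 'rV[R]_n :=
  [set x | exists y : nat -> 'rV[R]_n,
     [/\ y 0%N = x, forall m, C0 (y m.+1) /\ f (y m.+1) = y m &
         y @ \oo --> th]].

Definition skewF n (Phi : 'rV[R]_n -> 'rV[R]_n) (C0 : set 'rV[R]_n)
    (f0 f1 : R -> R) (X : 'rV[R]_n * R) : 'rV[R]_n * R :=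
  (Phi X.1, if `[< C0 X.1 >] then f0 X.2 else f1 X.2).

Definition skew_dom n (C0 C1 : set 'rV[R]_n) : set ('rV[R]_n * R) :=
  [set X | (C0 X.1 \/ C1 X.1) /\ Icc 0 1 X.2].

Definition skew_jac n (Phi : 'rV[R]_n -> 'rV[R]_n) (C0 : set 'rV[R]_n)
    (f0 f1 : R -> R) (X : 'rV[R]_n * R) : 'M[R]_(n + 1) :=
  block_mx (jac Phi X.1) 0 0
    (if `[< C0 X.1 >] then derive1 f0 X.2 else derive1 f1 X.2)%:M.

Definition Ws (T : pseudoMetricType R) (F : T -> T) (D : set T) (P : T) : set T :=
  [set X | (forall m, D (iter m F X)) /\ (fun m => iter m F X) @ \oo --> P].

Definition Wu (T : pseudoMetricType R) (F : T -> T) (D : set T) (P : T) : set T :=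
  [set X | exists Y : nat -> T,
     [/\ Y 0%N = X, forall m, D (Y m.+1) /\ F (Y m.+1) = Y m & Y @ \oo --> P]].

(* C^1 map (f : [0,1] -> R given as the restriction of a C^1 map of R) *)
Definition C1_map (f : R -> R) : Prop :=
  (forall x, derivable f x 1) /\ continuous (derive1 f).

Definition maps01_inj (f : R -> R) : Prop :=
  (forall x, Icc 0 1 x -> Icc 0 1 (f x)) /\
  (forall x y, Icc 0 1 x -> Icc 0 1 y -> f x = f y -> x = y).

Definition F0i (f0 : R -> R) (beta lambda : R) : Prop :=
  (forall x y, Icc 0 1 x -> Icc 0 1 y -> x < y -> f0 x < f0 y) /\
  (forall x, Icc 0 1 x -> (f0 x = x <-> x = 0 \/ x = 1)) /\
  derive1 f0 0 = beta /\ 1 < beta /\ derive1 f0 1 = lambda /\ 0 < lambda /\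
  lambda < 1 /\
  (forall x, Icc 0 1 x -> lambda <= derive1 f0 x <= beta).

Definition F0ii (f0 : R -> R) (lambda a0 b0 a1 b1 alpha : R) (N : nat) : Prop :=
  0 < a0 /\ b0 < 1 /\ b0 = f0 a0 /\ b1 = f0 a1 /\ 1 < alpha /\ (1 <= N)%N /\
  iter N f0 @` Icc a0 b0 = Icc a1 b1 /\
  (forall x, Icc a0 b0 x -> alpha < lambda * derive1 (iter N f0) x) /\
  (forall x, Icc 0 b0 x -> 1 < derive1 f0 x) /\
  (forall x, Icc a1 1 x -> derive1 f0 x < 1).

Definition F1i (f1 : R -> R) (gamma' gamma : R) : Prop :=
  [/\ forall x y, Icc 0 1 x -> Icc 0 1 y -> x < y -> f1 y < f1 x,
      forall x, Icc 0 1 x -> gamma' <= `|derive1 f1 x| <= gamma,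
      exists2 x, Icc 0 1 x & `|derive1 f1 x| = gamma',
      exists2 x, Icc 0 1 x & `|derive1 f1 x| = gamma &
      gamma < 1].

Definition F1ii (f1 : R -> R) (a1 alpha alphabar : R) : Prop :=
  1 / alpha < alphabar /\
  forall x, Icc (f1 (f1 a1)) a1 x -> alphabar <= `|derive1 f1 x|.

(* (F01) ; f0^{-2}(b0) is the c in [0,1] with f0 (f0 c) = b0 *)
Definition F01 (f0 f1 : R -> R) (a0 b0 a1 : R) : Prop :=
  [/\ f1 1 = 0,
      forall x, Icc a1 1 x -> 0 <= f1 x < a0 &
      forall c, Icc 0 1 c -> f0 (f0 c) = b0 ->
        forall y, 0 <= y < c -> exists2 x, Icc 0 1 x & f1 x = y].

(* C is a sub-box of the cube [0,1]^(s+u) spanning the whole stable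
   directions (first s coordinates), mapped affinely by Phi onto a sub-box
   of the cube spanning the whole unstable directions (last u coordinates):
   a Markov rectangle of the horseshoe. *)
Definition markov_affine_subcube (s u : nat)
    (Phi : 'rV[R]_(s + u) -> 'rV[R]_(s + u)) (C : set 'rV[R]_(s + u)) : Prop :=
  [/\ exists a b : 'I_(s + u) -> R,
        [/\ C = box a b, box a b `<=` cube (s + u)%N &
            forall j : 'I_s, a (lshift u j) = 0 /\ b (lshift u j) = 1],
      exists c d : 'I_(s + u) -> R,
        [/\ Phi @` C = box c d, box c d `<=` cube (s + u)%N &
            forall j : 'I_u, c (rshift s j) = 0 /\ d (rshift s j) = 1] &
      exists (M : 'M[R]_(s + u)) (b : 'rV[R]_(s + u)),
        forall x, C x -> Phi x = x *m M + b].

(* the standing setting: Phi is a diffeomorphism of R^(s+u) with a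
   horseshoe Gamma in the cube (s + u)%N, conjugate to the shift via pi, with
   s-dimensional stable and u-dimensional unstable bundles (rates ks, ku),
   Markov affine sub-cubes C0, C1, theta = pi^-1(0^Z) = 0 and the given
   local invariant manifolds of theta. *)
Definition horseshoe_setting (s u : nat)
    (Phi : 'rV[R]_(s + u) -> 'rV[R]_(s + u)) (Gamma : set 'rV[R]_(s + u))
    (pi : 'rV[R]_(s + u) -> Sigma2) (C0 C1 : set 'rV[R]_(s + u))
    (ks ku : R) : Prop :=
  diffeo Phi /\
  Gamma `<=` cube (s + u)%N /\
  conjugacy Phi Gamma pi /\
  hyperbolic_set Phi (jac Phi) Gamma s u ks ku /\
  markov_affine_subcube Phi C0 /\ markov_affine_subcube Phi C1 /\
  C0 `&` C1 = set0 /\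
  (forall x, Gamma x -> pi x 0 = false -> C0 x) /\
  (forall x, Gamma x -> pi x 0 = true -> C1 x) /\
  Gamma 0 /\ pi 0 = zero_seq /\
  Wsloc Phi C0 0 = [set v | cube (s + u)%N v /\ rsubmx v = 0] /\
  Wuloc Phi C0 0 = [set v | cube (s + u)%N v /\ lsubmx v = 0].

End Defs.
Arguments cube {R} n.

(* Main.v *)
Require Import Defs.
From HB Require Import structures.
From mathcomp Require Import all_boot all_order all_algebra.
From mathcomp Require Import all_classical all_reals all_analysis.
Import Order.TTheory GRing.Theory Num.Theory.
Import numFieldNormedType.Exports.
Local Open Scope classical_set_scope.
Local Open Scope ring_scope.

Section M.
Variable R : realType.

Lemma norm_entries_le m n p q (v : 'M[R]_(m,n)) (w : 'M[R]_(p,q)) :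
 (forall i j, v i j = 0 \/ exists i' j', `|v i j| <= `|w i' j'|) -> `|v| <= `|w|.
Proof.
move=> H.
rewrite [leLHS]/Num.Def.normr/= mx_normrE.
apply: bigmax_le => [|[i j] _]; first by [].
have [->|[i' [j' Hij]]] := H i j; first by rewrite normr0.
apply: (le_trans Hij).
rewrite [leRHS]/Num.Def.normr/= mx_normrE.
exact: (le_bigmax _ _ (i', j')).
Qed.

Lemma norm_row_l n1 n2 (x : 'rV[R]_n1) (y : 'rV[R]_n2) : `|x| <= `|row_mx x y|.
Proof.
apply: norm_entries_le => i j; right; exists i, (lshift n2 j).
by rewrite row_mxEl.
Qed.

Lemma norm_row_r n1 n2 (x : 'rV[R]_n1) (y : 'rV[R]_n2) : `|y| <= `|row_mx x y|.
Proof.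
apply: norm_entries_le => i j; right; exists i, (rshift n1 j).
by rewrite row_mxEr.
Qed.

Lemma norm_row_le n1 n2 (x : 'rV[R]_n1) (y : 'rV[R]_n2) :
  `|row_mx x y| <= `|x| + `|y|.
Proof.
have -> : row_mx x y = row_mx x 0 + row_mx 0 y.
  by rewrite add_row_mx addr0 add0r.
apply: (le_trans (ler_normD _ _)); apply: lerD.
- apply: norm_entries_le => i j; case: (splitP j) => k Hk.
    have -> : j = lshift _ k by exact: val_inj.
    by right; exists i, k; rewrite row_mxEl.
  have -> : j = rshift _ k by exact: val_inj.
  by left; rewrite row_mxEr mxE.
- apply: norm_entries_le => i j; case: (splitP j) => k Hk.
    have -> : j = lshift _ k by exact: val_inj.
    by left; rewrite row_mxEl mxE.
  have -> : j = rshift _ k by exact: val_inj.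
  by right; exists i, k; rewrite row_mxEr.
Qed.

Lemma mxpow_block n1 n2 (A : 'M[R]_n1) (B : 'M[R]_n2) m :
  mxpow (block_mx A 0 0 B) m = block_mx (mxpow A m) 0 0 (mxpow B m).
Proof.
elim: m => [|m IH] /=; first by rewrite -scalar_mx_block.
rewrite /mxpow /= -!/(mxpow _ _) IH mulmx_block.
by rewrite !mulmx0 !mul0mx !addr0 !add0r.
Qed.

Lemma mxpow_scalar (l : R) m : mxpow (l%:M : 'M[R]_1) m = (l ^+ m)%:M.
Proof.
elim: m => [|m IH]; first by rewrite expr0.
by rewrite /mxpow /= -/(mxpow _ _) IH -scalar_mxM exprS mulrC.
Qed.

Lemma sub_block_l n1 n2 (E : 'M[R]_n1) (F : 'M[R]_n2) (v : 'rV[R]_(n1 + n2)) :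
  (v <= block_mx E 0 0 F)%MS -> (lsubmx v <= E)%MS /\ (rsubmx v <= F)%MS.
Proof.
case/submxP => w ->; rewrite -[w]hsubmxK mul_row_block !mulmx0 addr0 add0r.
by rewrite row_mxKl row_mxKr !submxMl.
Qed.

Lemma block_sub n1 n2 (X E : 'M[R]_n1) (Y F : 'M[R]_n2) :
  (X <= E)%MS -> (Y <= F)%MS -> (block_mx X 0 0 Y <= block_mx E 0 0 F)%MS.
Proof.
case/submxP => D1 ->; case/submxP => D2 ->.
have -> : block_mx (D1 *m E) 0 0 (D2 *m F) = block_mx D1 0 0 D2 *m block_mx E 0 0 F.
  by rewrite mulmx_block !mulmx0 !mul0mx !addr0 !add0r.
exact: submxMl.
Qed.


Lemma pow_le_max (a mu : R) m : 0 <= a -> a <= mu -> a ^+ m <= mu ^+ m.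
Proof. by move=> a0 amu; apply: lerXn2r; rewrite // nnegrE (le_trans a0 amu). Qed.

Lemma hyp_block_lt n (A Es Eu : 'M[R]_n) (k : nat) (c ks ku l : R) :
  (\rank Es + \rank Eu = n)%N -> \rank Eu = k -> (1%:M <= Es + Eu)%MS ->
  (Es *m A <= Es)%MS -> (Eu *m A <= Eu)%MS ->
  0 < c -> 0 < ks -> ks < 1 -> 1 < ku ->
  (forall m (v : 'rV[R]_n), (v <= Es)%MS -> `|v *m mxpow A m| <= c * ks ^+ m * `|v|) ->
  (forall m (v : 'rV[R]_n), (v <= Eu)%MS -> c * ku ^+ m * `|v| <= `|v *m mxpow A m|) ->
  0 < l -> l < 1 ->
  hyperbolic_mx (block_mx A 0 0 (l%:M) : 'M[R]_(n + 1)) k.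
Proof.
move=> Hr Hk H1 HsA HuA c0 ks0 ks1 ku1 Hs Hu l0 l1.
have H1' : (1%:M <= block_mx Es 0 0 (1%:M) + block_mx Eu 0 0 (0 : 'M[R]_1))%MS.
  case/sub_addsmxP: H1 => [[w1 w2] /= Hw].
  apply/sub_addsmxP; exists (block_mx w1 0 0 (1%:M), block_mx w2 0 0 0) => /=.
  rewrite !mulmx_block !mulmx0 !mul0mx !addr0 !add0r mul1mx add_block_mx.
  by rewrite -Hw !addr0 -scalar_mx_block.
exists (block_mx Es 0 0 (1%:M)), (block_mx Eu 0 0 0).
split; first exact: H1'.
split.
  rewrite mxdirectEgeq /= !rank_diag_block_mx mxrank0 mxrank1.
  apply: leq_trans (mxrankS H1'); rewrite mxrank1.
  by rewrite addn0 addnAC Hr.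
split; first by rewrite rank_diag_block_mx mxrank0 addn0.
split.
  rewrite mulmx_block !mulmx0 !mul0mx !addr0 ?add0r.
  by apply: block_sub => //; exact: submx1.
split.
  rewrite mulmx_block !mulmx0 !mul0mx !addr0 ?add0r.
  by apply: block_sub.
have kuV0 : 0 < ku^-1 by rewrite invr_gt0 (lt_trans ltr01).
have kuV1 : ku^-1 < 1 by rewrite invf_lt1 // (lt_trans ltr01).
set mu := Num.max (Num.max ks l) ku^-1.
have mu0 : 0 < mu by rewrite !lt_max ks0.
have mu1 : mu < 1 by rewrite !gt_max ks1 l1 kuV1.
have ksmu : ks <= mu by rewrite !le_max lexx.
have lmu : l <= mu by rewrite !le_max lexx orbT.
have kumu : ku^-1 <= mu by rewrite !le_max lexx orbT.
exists (c + 1 + c^-1), mu; split => // [|m v].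
  by rewrite !addr_gt0 // invr_gt0.
have cV0 : 0 < c^-1 by rewrite invr_gt0.
have mum0 : 0 <= mu ^+ m by rewrite exprn_ge0 // ltW.
split.
- move=> /sub_block_l [Hx _].
  rewrite -[v]hsubmxK mxpow_block mxpow_scalar mul_row_block !mulmx0 addr0 add0r.
  rewrite mul_mx_scalar.
  set x := lsubmx v; set y := rsubmx v.
  apply: le_trans; first exact: norm_row_le.
  rewrite normrZ ger0_norm; last by rewrite exprn_ge0 // ltW.
  have hx := Hs m x Hx.
  have ha := norm_row_l _ _ x y; have hb := norm_row_r _ _ x y.
  have hK := pow_le_max _ _ m (ltW ks0) ksmu.
  have hL := pow_le_max _ _ m (ltW l0) lmu.
  have x0 : 0 <= `|x| by [].
  have y0 : 0 <= `|y| by [].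
  have K0 : 0 <= ks ^+ m by rewrite exprn_ge0 // ltW.
  have L0 : 0 <= l ^+ m by rewrite exprn_ge0 // ltW.
  set V := `|row_mx x y| in ha hb *.
  set K := ks ^+ m in hx hK K0 *. set L := l ^+ m in hL L0 *. set M := mu ^+ m in hK hL mum0 *.
  set a := `|x| in hx ha x0 *. set b := `|y| in hb y0 *. set w := `|x *m mxpow A m| in hx *.
  have e1 : c * K * a <= c * M * V.
    by rewrite -!mulrA ler_pM2l // ler_pM.
  have e2 : L * b <= M * V by rewrite ler_pM.
  have V0 : 0 <= V by apply: le_trans ha.
  have e3 : 0 <= c^-1 * M * V by rewrite !mulr_ge0 // ltW.
  apply: (le_trans (lerD (le_trans hx e1) e2)).
  by rewrite !mulrDl mul1r lerDl.
- move=> /sub_block_l [Hx Hy].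
  have y0 : rsubmx v = 0 by apply/eqP; rewrite -submx0.
  rewrite -[v]hsubmxK y0 mxpow_block mul_row_block !mulmx0 addr0 add0r mul0mx.
  set x := lsubmx v.
  apply: le_trans; first exact: norm_row_le.
  rewrite normr0 addr0.
  have hx := Hu m x Hx.
  have hb := norm_row_l _ _ (x *m mxpow A m) (0 : 'rV[R]_1).
  set V := `|row_mx _ _| in hb *.
  set w := `|x *m mxpow A m| in hx hb *.
  have kum0 : 0 < ku ^+ m by rewrite exprn_gt0 // (lt_trans ltr01).
  have hK := pow_le_max _ _ m (ltW kuV0) kumu.
  have kuVm : 0 <= ku^-1 ^+ m by rewrite exprn_ge0 // ltW.
  have : `|x| <= c^-1 * ku^-1 ^+ m * w.
    rewrite exprVn -invfM ler_pdivlMl ?mulr_gt0 //.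
  move=> ha; apply: (le_trans ha).
  rewrite -!mulrA; apply: ler_pM.
  - exact: ltW.
  - by apply: mulr_ge0; [apply: exprn_ge0; exact: ltW | exact: normr_ge0].
  - by rewrite lerDr ler_wpDl // ltW.
  - by apply: ler_pM => //; exact: normr_ge0.
Qed.

Lemma hyp_block_gt n (A Es Eu : 'M[R]_n) (k : nat) (c ks ku l : R) :
  (\rank Es + \rank Eu = n)%N -> \rank Eu = k -> (1%:M <= Es + Eu)%MS ->
  (Es *m A <= Es)%MS -> (Eu *m A <= Eu)%MS ->
  0 < c -> 0 < ks -> ks < 1 -> 1 < ku ->
  (forall m (v : 'rV[R]_n), (v <= Es)%MS -> `|v *m mxpow A m| <= c * ks ^+ m * `|v|) ->
  (forall m (v : 'rV[R]_n), (v <= Eu)%MS -> c * ku ^+ m * `|v| <= `|v *m mxpow A m|) ->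
  1 < l ->
  hyperbolic_mx (block_mx A 0 0 (l%:M) : 'M[R]_(n + 1)) k.+1.
Proof.
move=> Hr Hk H1 HsA HuA c0 ks0 ks1 ku1 Hs Hu l1.
have l0 : 0 < l by apply: lt_trans l1.
have H1' : (1%:M <= block_mx Es 0 0 (0 : 'M[R]_1) + block_mx Eu 0 0 (1%:M))%MS.
  case/sub_addsmxP: H1 => [[w1 w2] /= Hw].
  apply/sub_addsmxP; exists (block_mx w1 0 0 0, block_mx w2 0 0 (1%:M)) => /=.
  rewrite !mulmx_block !mulmx0 !mul0mx !addr0 ?add0r mul1mx add_block_mx.
  by rewrite -Hw !addr0 ?add0r -scalar_mx_block.
exists (block_mx Es 0 0 0), (block_mx Eu 0 0 (1%:M)).
split; first exact: H1'.
split.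
  rewrite mxdirectEgeq /= !rank_diag_block_mx mxrank0 mxrank1.
  apply: leq_trans (mxrankS H1'); rewrite mxrank1.
  by rewrite addn0 addn1 addnS Hr addn1.
split; first by rewrite rank_diag_block_mx mxrank1 addn1 Hk.
split.
  rewrite mulmx_block !mulmx0 !mul0mx !addr0 ?add0r.
  by apply: block_sub.
split.
  rewrite mulmx_block !mulmx0 !mul0mx !addr0 ?add0r mul1mx.
  by apply: block_sub => //; exact: submx1.
have kuV0 : 0 < ku^-1 by rewrite invr_gt0 (lt_trans ltr01).
have kuV1 : ku^-1 < 1 by rewrite invf_lt1 // (lt_trans ltr01).
have lV0 : 0 < l^-1 by rewrite invr_gt0.
have lV1 : l^-1 < 1 by rewrite invf_lt1.
set mu := Num.max (Num.max ks l^-1) ku^-1.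
have mu0 : 0 < mu by rewrite !lt_max ks0.
have mu1 : mu < 1 by rewrite !gt_max ks1 lV1 kuV1.
have ksmu : ks <= mu by rewrite !le_max lexx.
have lmu : l^-1 <= mu by rewrite !le_max lexx orbT.
have kumu : ku^-1 <= mu by rewrite !le_max lexx orbT.
exists (c + 1 + c^-1), mu; split => // [|m v].
  by rewrite !addr_gt0 // invr_gt0.
have cV0 : 0 < c^-1 by rewrite invr_gt0.
have mum0 : 0 <= mu ^+ m by rewrite exprn_ge0 // ltW.
split.
- move=> /sub_block_l [Hx Hy].
  have y0 : rsubmx v = 0 by apply/eqP; rewrite -submx0.
  rewrite -[v]hsubmxK y0 mxpow_block mul_row_block !mulmx0 addr0 add0r mul0mx.
  set x := lsubmx v.
  apply: le_trans; first exact: norm_row_le.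
  rewrite normr0 addr0.
  have hx := Hs m x Hx.
  have ha := norm_row_l _ _ x (0 : 'rV[R]_1).
  have hK := pow_le_max _ _ m (ltW ks0) ksmu.
  have K0 : 0 <= ks ^+ m by rewrite exprn_ge0 // ltW.
  apply: (le_trans hx).
  rewrite -!mulrA; apply: ler_pM.
  - exact: ltW.
  - by apply: mulr_ge0 => //; exact: normr_ge0.
  - by rewrite -addrA lerDl addr_ge0 // ltW.
  - by apply: ler_pM => //; exact: normr_ge0.
- move=> /sub_block_l [Hx _].
  rewrite -[v]hsubmxK mxpow_block mxpow_scalar mul_row_block !mulmx0 addr0 add0r.
  rewrite mul_mx_scalar.
  set x := lsubmx v; set y := rsubmx v.
  apply: le_trans; first exact: norm_row_le.
  have hx := Hu m x Hx.
  have ha := norm_row_l _ _ (x *m mxpow A m) (l ^+ m *: y).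
  have hb := norm_row_r _ _ (x *m mxpow A m) (l ^+ m *: y).
  rewrite normrZ ger0_norm in hb; last by rewrite exprn_ge0 // ltW.
  have kum0 : 0 < ku ^+ m by rewrite exprn_gt0 // (lt_trans ltr01).
  have lm0 : 0 < l ^+ m by rewrite exprn_gt0.
  have hK := pow_le_max _ _ m (ltW kuV0) kumu.
  have hL := pow_le_max _ _ m (ltW lV0) lmu.
  have kuVm : 0 <= ku^-1 ^+ m by rewrite exprn_ge0 // ltW.
  have lVm : 0 <= l^-1 ^+ m by rewrite exprn_ge0 // ltW.
  set W := `|row_mx _ _| in ha hb *.
  have W0 : 0 <= W by apply: le_trans ha.
  have e1 : `|x| <= c^-1 * mu ^+ m * W.
    apply: (@le_trans _ _ (c^-1 * ku^-1 ^+ m * `|x *m mxpow A m|)).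
      by rewrite exprVn -invfM ler_pdivlMl ?mulr_gt0 //.
    rewrite -!mulrA; apply: ler_pM => //.
    - exact: ltW.
    - by apply: mulr_ge0 => //; exact: normr_ge0.
    - by apply: ler_pM => //; exact: normr_ge0.
  have e2 : `|y| <= mu ^+ m * W.
    apply: (@le_trans _ _ (l^-1 ^+ m * (l ^+ m * `|y|))).
      by rewrite mulrA exprVn mulVf ?mul1r // gt_eqF.
    by apply: ler_pM => //; apply: mulr_ge0 => //; exact: ltW.
  apply: (le_trans (lerD e1 e2)).
  rewrite !mulrDl mul1r addrC lerD2r.
  by rewrite mulrC lerDr; apply: mulr_ge0 => //; apply: mulr_ge0 => //; exact: ltW.
Qed.

End M.

Section B.
Variable R : realType.

Lemma exists_above (f : R -> R) (beta : R) :
  derivable f 0 1 -> derive1 f 0 = beta -> 1 < beta -> f 0 = 0 ->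
  exists h, [/\ 0 < h, h < 1 & h < f h].
Proof.
move=> df db b1 f00.
have H : (fun h : R => h^-1 *: ((f \o shift 0) (h *: 1) - f 0)) @ 0^' --> beta.
  by rewrite -db derive1E; exact: df.
have H2 : \forall t \near (0 : R)^', 1 < t^-1 *: (f (t%:A + 0) - f 0).
  exact: (cvgr_gt _ H _ b1).
move: H2 => [e /= e0 He].
set h := Num.min (e / 2) (1 / 2).
have h0 : 0 < h by rewrite lt_min divr_gt0 //= divr_gt0.
have h1 : h < 1 by rewrite gt_min; apply/orP; right; rewrite ltr_pdivrMr // mul1r ltr1n.
have he : h < e by rewrite gt_min; apply/orP; left; rewrite ltr_pdivrMr // ltr_pMr // ltr1n.
have := He h; rewrite /ball /= sub0r normrN gtr0_norm // => /(_ he).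
move=> /(_ (lt0r_neq0 h0)) hq.
exists h; split => //.
move: hq; rewrite /= f00 subr0 addr0 /GRing.scale /= mulr1.
by rewrite ltr_pdivlMl // mulr1.
Qed.


Lemma cvg_bounds (u : R ^nat) (L a b : R) :
  u @ \oo --> L -> (forall n, a <= u n <= b) -> a <= L <= b.
Proof.
move=> uL ub.
have lL : lim (u @ \oo) = L by apply: cvg_lim.
rewrite -lL; apply/andP; split.
- apply: limr_ge; first exact: cvgP uL.
  by near=> n; have /andP[] := ub n.
- apply: limr_le; first exact: cvgP uL.
  by near=> n; have /andP[] := ub n.
Unshelve. all: by end_near. Qed.

Lemma f_above (f : R -> R) : continuous f ->
  (forall x, 0 <= x <= 1 -> (f x = x <-> x = 0 \/ x = 1)) ->
  (exists h, [/\ 0 < h, h < 1 & h < f h]) ->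
  forall x, 0 < x < 1 -> x < f x.
Proof.
move=> fc Hfix [h [h0 h1 hh]] x /andP[x0 x1].
rewrite ltNge; apply/negP => fx.
have gc : continuous (fun t => f t - t).
  by move=> t; apply: cvgB; [exact: fc | exact: cvg_id].
have root : forall a b, 0 < a -> b < 1 -> a <= b ->
    Num.min (f a - a) (f b - b) <= 0 <= Num.max (f a - a) (f b - b) -> False.
  move=> a b a0 b1 ab hv.
  have [c cab fc0] := IVT ab (continuous_subspaceT gc) hv.
  move: cab; rewrite in_itv /= => /andP[ac cb].
  have c0 : 0 < c by apply: lt_le_trans ac.
  have c1 : c < 1 by apply: le_lt_trans b1.
  have /Hfix : 0 <= c <= 1 by rewrite !ltW.
  have -> : f c = c by apply/eqP; rewrite -subr_eq0 fc0.
  by case=> [] // /(_ erefl) [ce|ce]; move: c0 c1; rewrite ce ltxx.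
have hpos : 0 < f h - h by rewrite subr_gt0.
have xneg : f x - x <= 0 by rewrite subr_le0.
have [hx|xh] := leP h x.
- apply: (root h x) => //.
  rewrite ge_min le_max xneg.
  by apply/andP; split; [apply/orP; right | apply/orP; left; exact: ltW].
- apply: (root x h x0 h1 (ltW xh)).
  rewrite ge_min le_max xneg.
  by apply/andP; split; [apply/orP; left | apply/orP; right; exact: ltW].
Qed.


Lemma iter_to1 (f : R -> R) : continuous f ->
  (forall x, 0 < x < 1 -> x < f x) -> (forall x, 0 < x < 1 -> f x < 1) ->
  forall x, 0 < x < 1 -> (fun m => iter m f x) @ \oo --> (1 : R).
Proof.
move=> fc up lt1 x /andP[x0 x1].
set u := fun m => iter m f x.
have uS : forall m, u m.+1 = f (u m) by move=> m; rewrite /u iterS.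
have ub : forall m, 0 < u m < 1.
  elim=> [|m IH]; first by rewrite /u /= x0.
  rewrite uS; have := up _ IH; have := lt1 _ IH; case/andP: IH => a b c d.
  by rewrite c (lt_trans a d).
have und : nondecreasing_seq u.
  by apply/nondecreasing_seqP => m; rewrite uS; apply/ltW/up/ub.
have hub : has_ubound (range u).
  by exists 1 => _ [m _ <-]; case/andP: (ub m) => _ /ltW.
have uL := nondecreasing_cvgn und hub.
set L := sup (range u) in uL.
have /andP[xL L1] : x <= L <= 1.
  apply: (cvg_bounds _ _ _ _ uL) => n; case/andP: (ub n) => _ /ltW ->.
  by rewrite andbT; have := und 0%N n (leq0n n).
have fL : f L = L.
  have h1 : (fun m => u m.+1) @ \oo --> L by rewrite (cvg_shiftS u).
  have h2 : (fun m => u m.+1) @ \oo --> f L.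
    have -> : (fun m => u m.+1) = f \o u by apply: funext => m; rewrite uS.
    by apply: continuous_cvg => //; exact: fc.
  exact: (cvg_unique _ h2 h1).
have -> : (1 : R) = L.
  apply/eqP; rewrite eq_le L1 andbT leNgt; apply/negP => L1'.
  have := up L; rewrite fL ltxx => /(_ _)/notF; apply.
  by rewrite L1' (lt_le_trans x0 xL).
exact: uL.
Qed.

Lemma iter_to0 (f g : R -> R) : continuous f ->
  (forall x, 0 < x < 1 -> x < f x) ->
  (forall y, 0 < y < 1 -> 0 < g y < 1 /\ f (g y) = y) ->
  forall x, 0 < x < 1 -> (fun m => iter m g x) @ \oo --> (0 : R).
Proof.
move=> fc up hg x /andP[x0 x1].
set v := fun m => iter m g x.
have vS : forall m, v m.+1 = g (v m) by move=> m; rewrite /v iterS.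
have vb : forall m, 0 < v m < 1.
  elim=> [|m IH]; first by rewrite /v /= x0.
  by rewrite vS; case: (hg _ IH).
have fv : forall m, f (v m.+1) = v m by move=> m; rewrite vS; case: (hg _ (vb m)).
have vni : nonincreasing_seq v.
  apply/nonincreasing_seqP => m; apply/ltW; rewrite -[X in _ < X](fv m).
  exact/up/vb.
have hlb : has_lbound (range v).
  by exists 0 => _ [m _ <-]; case/andP: (vb m) => /ltW.
have vL := nonincreasing_cvgn vni hlb.
set L := inf _ in vL.
have /andP[L0 Lx] : 0 <= L <= x.
  apply: (cvg_bounds _ _ _ _ vL) => n; case/andP: (vb n) => /ltW -> _ /=.
  by have := vni 0%N n (leq0n n).
have fL : f L = L.
  have h1 : (fun m => f (v m.+1)) @ \oo --> L.
    by have -> : (fun m => f (v m.+1)) = v by apply: funext => m; rewrite fv.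
  have h2 : (fun m => f (v m.+1)) @ \oo --> f L.
    have -> : (fun m => f (v m.+1)) = f \o (fun m => v m.+1) by [].
    apply: continuous_cvg; first exact: fc.
    by rewrite (cvg_shiftS v).
  exact: (cvg_unique _ h2 h1).
have -> : (0 : R) = L.
  apply/eqP; rewrite eq_le L0 /= leNgt; apply/negP => L0'.
  have := up L; rewrite fL ltxx => /(_ _)/notF; apply.
  by rewrite L0' (le_lt_trans Lx x1).
exact: vL.
Qed.

End B.

Section C.
Variable R : realType.

Lemma mxpow_comm n (A : 'M[R]_n) m : A *m mxpow A m = mxpow A m *m A.
Proof.
elim: m => [|m IH]; first by rewrite /mxpow /= mulmx1 mul1mx.
by rewrite /mxpow /= -/(mxpow _ _) mulmxA IH.
Qed.

Lemma cocycle_fix n (J : 'rV[R]_n -> 'M[R]_n) (f : 'rV[R]_n -> 'rV[R]_n) x :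
  f x = x -> forall m, cocycle J f m x = mxpow (J x) m.
Proof.
move=> fx; elim=> [|m IH] //=.
by rewrite fx IH mxpow_comm.
Qed.

End C.
Theorem lemma2p6 (R : realType) (s u : nat)
    (f0 f1 : R -> R) (beta lambda gamma' gamma : R)
    (a0 b0 a1 b1 alpha alphabar : R) (N : nat)
    (Phi : 'rV[R]_(s + u) -> 'rV[R]_(s + u)) (Gamma : set 'rV[R]_(s + u))
    (pi : 'rV[R]_(s + u) -> Sigma2) (C0 C1 : set 'rV[R]_(s + u))
    (ks ku : R) :
  (0 < s)%N -> (0 < u)%N ->
  (* f0, f1 : [0,1] -> [0,1] are C^1 injective maps *)
  C1_map f0 -> C1_map f1 -> maps01_inj f0 -> maps01_inj f1 ->
  F0i f0 beta lambda ->
  F0ii f0 lambda a0 b0 a1 b1 alpha N ->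
  F1i f1 gamma' gamma ->
  F1ii f1 a1 alpha alphabar ->
  F01 f0 f1 a0 b0 a1 ->
  (* the horseshoe Gamma of Phi, with rates ks (stable) and ku (unstable) *)
  horseshoe_setting Phi Gamma pi C0 C1 ks ku ->
  (* domination: expansion of Phi along E^u stronger than beta,
     contraction along E^s stronger than min {lambda, gamma'} *)
  0 < ks -> ks < Num.min lambda gamma' -> beta < ku ->
  let F := skewF Phi C0 f0 f1 in
  let D := skew_dom C0 C1 in
  let P : 'rV[R]_(s + u) * R := (0, 1) in
  let Q : 'rV[R]_(s + u) * R := (0, 0) in
  [/\ F P = P /\ saddle_mx (skew_jac Phi C0 f0 f1 P) u,
      F Q = Q /\ saddle_mx (skew_jac Phi C0 f0 f1 Q) u.+1,
      (exists X, Ws F D P X /\ Wu F D Q X) &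
      (exists X, Wu F D P X /\ Ws F D Q X)].
Proof.
move=> s0 u0 [df0 _] [df1 _] [f0m f0inj] [f1m f1inj] hF0i hF0ii hF1i hF1ii hF01 hhs
  ks0 ksmin bku F D P Q.
case: hF0i => f0incr [f0fix [db0 [beta1 [dl1 [l0 [l1 _]]]]]].
case: hF01 => f11 _ _.
case: hhs => _ [_ [hconj [hhyp [_ [_ [C01 [piC0 [piC1 [Gam0 [pi0 [Ws0 _]]]]]]]]]]].
case: hconj => Ginv [Gsemi [Ginj [Gsurj [_ Gcont]]]].
have I01 : forall x : R, 0 <= x <= 1 -> Icc 0 1 x by [].
have f00 : f0 0 = 0 by apply/(f0fix 0); [apply: I01; rewrite lexx ler01 | left].
have f01 : f0 1 = 1 by apply/(f0fix 1); [apply: I01; rewrite lexx ler01 | right].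
have f0c : continuous f0.
  by move=> x; apply: differentiable_continuous; apply/derivable1_diffP.
have Phi0 : Phi 0 = 0.
  apply: Ginj => //; first exact: Ginv.
  rewrite Gsemi // pi0; apply: funext => k; by [].
have C00 : C0 0.
  have : Wsloc Phi C0 0 0.
    rewrite Ws0; split; last by rewrite linear0.
    by move=> j; rewrite mxE lexx ler01.
  by case=> /(_ 0%N).
have C0T : `[< C0 0 >] = true by apply/asboolP.
have ks1 : ks < 1.
  move: ksmin; rewrite lt_min => /andP[kl _]; exact: lt_trans kl l1.
have ku1 : 1 < ku by apply: lt_trans beta1 bku.
case: hhyp => Es [Eu [c [c0 hEs]]].
have [rs [ru [H1 [Hsi [Hui Hb]]]]] := hEs 0 Gam0.
rewrite Phi0 in Hsi Hui.
case/andP: Hsi => Hsi _; case/andP: Hui => Hui _.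
have Hr : (\rank (Es 0%R) + \rank (Eu 0%R))%N = (s + u)%N by rewrite rs ru.
have Hs : forall m (v : 'rV[R]_(s + u)), (v <= Es 0)%MS ->
    `|v *m mxpow (jac Phi 0) m| <= c * ks ^+ m * `|v|.
  by move=> m v hv; have [+ _] := Hb m v; rewrite (cocycle_fix _ _ _ _ _ Phi0); apply.
have Hu : forall m (v : 'rV[R]_(s + u)), (v <= Eu 0)%MS ->
    c * ku ^+ m * `|v| <= `|v *m mxpow (jac Phi 0) m|.
  by move=> m v hv; have [_ +] := Hb m v; rewrite (cocycle_fix _ _ _ _ _ Phi0); apply.
have FP : F P = P by rewrite /F /P /skewF /= C0T f01 Phi0.
have FQ : F Q = Q by rewrite /F /Q /skewF /= C0T f00 Phi0.
split.
- split => //; rewrite /skew_jac /= C0T dl1; split.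
    by apply: (hyp_block_lt _ _ _ _ _ _ _ _ _ _ Hr ru H1 Hsi Hui c0 ks0 ks1 ku1 Hs Hu l0 l1).
  by apply/andP; split => //; rewrite addn1 ltnS leq_addl.
- split => //; rewrite /skew_jac /= C0T db0; split.
    by apply: (hyp_block_gt _ _ _ _ _ _ _ _ _ _ Hr ru H1 Hsi Hui c0 ks0 ks1 ku1 Hs Hu beta1).
  by apply/andP; split => //; rewrite addn1 ltnS -{1}[u]add0n ltn_add2r.
- (* the central segment *)
  have f0up : forall x, 0 < x < 1 -> x < f0 x.
    apply: (f_above _ f0 f0c (fun x hx => f0fix x (I01 x hx))).
    exact: (exists_above _ _ _ (df0 0) db0 beta1 f00).
  have f0lt1 : forall x, 0 < x < 1 -> f0 x < 1.
    move=> x /andP[x0 x1].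
    have hx : Icc 0 1 x by apply: I01; rewrite !ltW.
    have /andP[_ fx1] : 0 <= f0 x <= 1 by apply: f0m.
    rewrite lt_neqAle fx1 andbT; apply/eqP => fx.
    have : x = 1 by apply: f0inj => //; [apply: I01; rewrite lexx ler01 | rewrite fx f01].
    by move=> xe; move: x1; rewrite xe ltxx.
  have : forall y : R, exists t : R, 0 < y < 1 -> 0 < t < 1 /\ f0 t = y.
    move=> y; have [hy|hy] := boolP (0 < y < 1); last first.
      by exists 0 => hy'; exfalso; move/negP: hy; apply.
    have [t tI ft] : exists2 t, t \in `[0, 1] & f0 t = y.
      apply: IVT; first exact: ler01.
        exact: continuous_subspaceT.
      rewrite f00 f01; case/andP: hy => y0 y1.
      by rewrite ge_min le_max; apply/andP; split; apply/orP; [left | right]; exact: ltW.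
    exists t => _; split => //.
    move: tI; rewrite in_itv /= => /andP[t0 t1].
    case/andP: hy => y0 y1.
    rewrite !lt_neqAle t0 t1 !andbT; apply/andP; split.
      by apply/eqP => te; move: y0; rewrite -ft -te f00 ltxx.
    by apply/eqP => te; move: y1; rewrite -ft te f01 ltxx.
  case/choice => g Hg.
  have Hg' : forall y, 0 < y < 1 -> 0 < g y < 1 /\ f0 (g y) = y by move=> y /Hg.
  have Fc : forall y, F (0, y) = (0, f0 y) by move=> y; rewrite /F /skewF /= C0T Phi0.
  have iterF : forall m y, iter m F (0, y) = (0, iter m f0 y).
    by move=> m y; elim: m => //= m ->; rewrite Fc.
  have h12 : (0 < 1 / 2 :> R) && (1 / 2 < 1 :> R).
    apply/andP; split; first by rewrite divr_gt0.
    by rewrite ltr_pdivrMr // mul1r ltr1n.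
  have itf : forall m, 0 < iter m f0 (1 / 2) < 1.
    elim=> //= m IH; have := f0up _ IH; have := f0lt1 _ IH.
    by case/andP: IH => a _ b0' c0'; rewrite b0' (lt_trans a c0').
  have itg : forall m, 0 < iter m g (1 / 2) < 1.
    by elim=> //= m IH; case: (Hg' _ IH).
  exists (0, 1 / 2); split.
  + split.
      move=> m; rewrite iterF; split; first by left.
      by apply: I01; case/andP: (itf m) => a b; rewrite !ltW.
    rewrite (_ : (fun m => iter m F (0, 1 / 2)) = fun m => (0, iter m f0 (1 / 2))); last first.
      by apply: funext => m; rewrite iterF.
    apply: (@cvg_pair _ _ _ _ (nbhs (0 : 'rV[R]_(s + u))) (nbhs (1 : R))).
      exact: cvg_cst.
    exact: (iter_to1 _ _ f0c f0up f0lt1 _ h12).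
  + exists (fun m => (0, iter m g (1 / 2))); split => //.
      move=> m; split.
        split; first by left.
        by apply: I01; case/andP: (itg m.+1) => a b; rewrite !ltW.
      by rewrite Fc /=; case: (Hg' _ (itg m)) => _ ->.
    apply: (@cvg_pair _ _ _ _ (nbhs (0 : 'rV[R]_(s + u))) (nbhs (0 : R))).
      exact: cvg_cst.
    exact: (iter_to0 _ _ _ f0c f0up Hg' _ h12).
- (* the other connection, through the horseshoe *)
  pose e (j : int) : Sigma2 := fun k => k == j.
  have : forall j : int, exists z, Gamma z /\ pi z = e j.
    by move=> j; have [z Gz pz] := Gsurj (e j); exists z.
  case/choice => z Hz.
  have Gz : forall j, Gamma (z j) by move=> j; case: (Hz j).
  have pz : forall j, pi (z j) = e j by move=> j; case: (Hz j).
  have Phiz : forall j, Phi (z j) = z (j - 1).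
    move=> j; apply: Ginj; [exact: Ginv | exact: Gz |].
    rewrite Gsemi // !pz; apply: funext => k; rewrite /Defs.shift /e.
    apply/eqP/eqP => [<-|->]; [by rewrite addrK | by rewrite subrK].
  have Cz : forall j, j != 0 -> C0 (z j).
    by move=> j j0; apply: piC0 => //; rewrite pz /e eq_sym (negbTE j0).
  have nC0z : ~ C0 (z 0).
    move=> h; have h1 : C1 (z 0) by apply: piC1 => //; rewrite pz /e.
    by have : (C0 `&` C1) (z 0) by []; rewrite C01.
  have Dz : forall j, (C0 (z j) \/ C1 (z j)).
    move=> j; have [->|j0] := eqVneq j 0; last by left; apply: Cz.
    by right; apply: piC1 => //; rewrite pz /e.
  have zconv : forall sq : nat -> int,
      (forall K : nat, \forall m \near \oo, K%:Z < `|sq m|) ->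
      (fun m => z (sq m)) @ \oo --> (0 : 'rV[R]_(s + u)).
    move=> sq hsq; apply/cvgrPdist_lt => eps eps0.
    have [K HK] := Gcont 0 eps Gam0 eps0.
    near=> m; apply: HK => //.
    move=> k kK; rewrite pz pi0 /e /zero_seq; apply/negbTE/eqP => ksq.
    have : K%:Z < `|sq m| by near: m; exact: hsq.
    by rewrite -ksq ltNge kK.
  have sqP : forall K : nat, \forall m \near \oo, K%:Z < `|(m%:Z : int)|.
    move=> K; near=> m; rewrite ger0_norm // ltz_nat.
    by near: m; exact: nbhs_infty_gt.
  have sqN : forall K : nat, \forall m \near \oo, K%:Z < `|(- (m%:Z) : int)|.
    move=> K; near=> m; rewrite normrN ger0_norm // ltz_nat.
    by near: m; exact: nbhs_infty_gt.
  have FX0 : F (z 0, 1) = (z (-1), 0).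
    rewrite /F /skewF /= Phiz sub0r f11.
    by have -> : `[< C0 (z 0) >] = false by apply/asboolP.
  have FXj : forall j, j != 0 -> F (z j, 0) = (z (j - 1), 0).
    move=> j j0; rewrite /F /skewF /= Phiz f00.
    by have -> : `[< C0 (z j) >] = true by apply/asboolP; apply: Cz.
  have iterX : forall m, iter m.+1 F (z 0, 1) = (z (- (m.+1)%:Z), 0).
    elim=> [|m IH]; first by rewrite /= FX0.
    rewrite iterS IH FXj; last by rewrite oppr_eq0.
    by rewrite -opprD -(addn1 m.+1) PoszD.
  exists (z 0, 1); split.
  + exists (fun m => (z m%:Z, 1)); split => //.
      move=> m; split.
        by split; [left; apply: Cz | apply: I01; rewrite ler01 lexx].
      rewrite /F /skewF /= Phiz f01.
      have -> : `[< C0 (z m.+1%:Z) >] = true by apply/asboolP; apply: Cz.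
      by rewrite -(addn1 m) PoszD addrK.
    apply: (@cvg_pair _ _ _ _ (nbhs (0 : 'rV[R]_(s + u))) (nbhs (1 : R))).
      exact: (zconv _ sqP).
    exact: cvg_cst.
  + split.
      case=> [|m]; first by split; [exact: Dz | apply: I01; rewrite ler01 lexx].
      by rewrite iterX; split; [exact: Dz | apply: I01; rewrite lexx ler01].
    have iter1 : forall m, iter m F (z 0, 1) = (z (- (m%:Z)), (iter m F (z 0, 1)).2).
      move=> m; rewrite [LHS]surjective_pairing; congr (_, _).
      by case: m => [|m]; [rewrite /= oppr0 | rewrite iterX].
    rewrite (_ : (fun n => iter n F (z 0, 1)) = fun m => (z (- (m%:Z)), (iter m F (z 0, 1)).2)); last first.
      by apply: funext => m; rewrite -iter1.
    apply: (@cvg_pair _ _ _ _ (nbhs (0 : 'rV[R]_(s + u))) (nbhs (0 : R))).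
      exact: (zconv _ sqN).
    rewrite -(cvg_shiftS (fun m => (iter m F (z 0, 1)).2)).
    rewrite (_ : (fun n => (iter n.+1 F (z 0, 1)).2) = fun m => 0); last first.
      by apply: funext => m; rewrite iterX.
    exact: cvg_cst.
Unshelve. all: by end_near. Qed.
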